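(* Under the standing assumptions below, define for each $j\in[d]$ and $c\in\mathbb{R}$ \[ \omega_j(c)=\begin{cases} 0, & c\le -\frac{n}{\sqrt{n+1}},\\[0.3em] \max\Big\{0,\ \hat\mu_j-\hat\sigma_j|c|\sqrt{\frac{(n+1)^2}{n^2-(n+1)c^2}}\Big\}, & -\frac{n}{\sqrt{n+1}}<c<0,\\[0.3em] \hat\mu_j+\hat\sigma_j|c|\sqrt{\frac{(n+1)^2}{n^2-(n+1)c^2}}, & 0\le c<\frac{n}{\sqrt{n+1}},\\[0.3em] +\infty, & c\ge \frac{n}{\sqrt{n+1}}. \end{cases} \] Then each $\omega_j:\mathbb{R}\to[0,\infty]$ is monotonically nondecreasing, and almost surely, for every $c\in\mathbb{R}$, \[ S^{n+1}_{\mathrm{oracle}}\le c\iff 0\le E^{n+1}_j\le \omega_j(c)\ \text{ for all } j\in[d]. \]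
   Context: Setting: $n\ge 2$ and $d\ge 1$ are integers, $[m]:=\{1,\dots,m\}$. $E^1,\dots,E^{n+1}$ are random vectors in $\mathbb{R}^d$ (residual vectors; $E^i=(E^i_1,\dots,E^i_d)$), assumed exchangeable. Assumption A: for each $j\in[d]$, the distribution of $E^i_j$ has no point masses, $E^i_j\ge 0$ almost surely, $\mathbb{E}[E^i_j]<\infty$ and $0<\mathrm{Var}(E^i_j)<\infty$; moreover, for each $j$, the values $E^1_j,\dots,E^{n+1}_j$ are almost surely pairwise distinct. Calibration statistics: $\hat\mu_j=\frac1n\sum_{i=1}^n E^i_j$ and $\hat\sigma_j=\sqrt{\frac1n\sum_{i=1}^n(E^i_j-\hat\mu_j)^2}$. Oracle statistics: $\hat\mu^{\mathrm{oracle}}_j=\frac1{n+1}\sum_{i=1}^{n+1}E^i_j$ and $\hat\sigma^{\mathrm{oracle}}_j=\sqrt{\frac1n\sum_{i=1}^{n+1}(E^i_j-\hat\mu^{\mathrm{oracle}}_j)^2}$. For $t\in\mathbb{R}^d_+$ and $\mu,\sigma\in\mathbb{R}^d$ with $\sigma_j>0$, $\Phi(t;\mu,\sigma):=\max_{1\le j\le d}\frac{t_j-\mu_j}{\sigma_j}$. Oracle scores: $S^i_{\mathrm{oracle}}:=\Phi(E^i;\hat\mu^{\mathrm{oracle}},\hat\sigma^{\mathrm{oracle}})$ for $i\in[n+1]$. *)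

(* Defs.v *)
From HB Require Import structures.
From mathcomp Require Import all_boot all_order all_algebra all_fingroup.
From mathcomp Require Import all_classical all_reals all_analysis.
Set Implicit Arguments. Unset Strict Implicit. Unset Printing Implicit Defensive.
Import Order.TTheory GRing.Theory Num.Theory.
Local Open Scope classical_set_scope.
Local Open Scope ring_scope.

(* A realization of the residuals: e i j = E^{i+1}_{j+1}, i : 'I_(n+1), j : 'I_d.
   The test point E^{n+1} is index ord_max; calibration points are i < n. *)
Section Stats.
Variables (R : realType) (n d : nat).
Implicit Types (e : 'I_n.+1 -> 'I_d -> R).

Definition mu_hat e (j : 'I_d) : R :=
  n%:R^-1 * \sum_(i < n.+1 | (i < n)%N) e i j.
Definition sigma_hat e (j : 'I_d) : R :=
  Num.sqrt (n%:R^-1 * \sum_(i < n.+1 | (i < n)%N) (e i j - mu_hat e j) ^+ 2).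
Definition mu_oracle e (j : 'I_d) : R :=
  (n.+1)%:R^-1 * \sum_(i < n.+1) e i j.
Definition sigma_oracle e (j : 'I_d) : R :=
  Num.sqrt (n%:R^-1 * \sum_(i < n.+1) (e i j - mu_oracle e j) ^+ 2).

(* Phi(t; mu, sigma) = max_j (t_j - mu_j)/sigma_j, as an extended real
   (the max over the nonempty index set [d], d >= 1, is finite). *)
Definition Phi (t mu sigma : 'I_d -> R) : \bar R :=
  \big[Order.max/-oo%E]_(j < d) (((t j - mu j) / sigma j)%:E).

Definition S_oracle e (i : 'I_n.+1) : \bar R :=
  Phi (e i) (mu_oracle e) (sigma_oracle e).

Definition omega e (j : 'I_d) (c : R) : \bar R :=
  let thr := n%:R / Num.sqrt (n.+1)%:R in
  let g := `|c| * Num.sqrt ((n.+1)%:R ^+ 2 / (n%:R ^+ 2 - (n.+1)%:R * c ^+ 2)) in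
  if c <= - thr then 0%E
  else if c < 0 then (Num.max 0 (mu_hat e j - sigma_hat e j * g))%:E
  else if c < thr then (mu_hat e j + sigma_hat e j * g)%:E
  else +oo%E.
End Stats.

(* Equality is required on all
   measurable rectangles, a pi-system generating the product sigma-algebra,
   hence this is equality of joint laws. *)
Definition exchangeable d0 (T : measurableType d0) (R : realType)
  (P : probability T R) (n d : nat) (E : 'I_n.+1 -> 'I_d -> T -> R) : Prop :=
  forall (s : {perm 'I_n.+1}) (B : 'I_n.+1 -> 'I_d -> set R),
    (forall i j, measurable (B i j)) ->
    P [set t | forall i j, B i j (E i j t)] =
    P [set t | forall i j, B i j (E (s i) j t)].

(* Main.v *)
Require Import Defs.
From HB Require Import structures.
From mathcomp Require Import all_boot all_order all_algebra all_fingroup.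
From mathcomp Require Import all_classical all_reals all_analysis.
From mathcomp Require Import zify ring lra.
Import Order.TTheory GRing.Theory Num.Theory.
Local Open Scope classical_set_scope.
Local Open Scope ring_scope.

Section Abs.
Local Set Implicit Arguments. Local Unset Strict Implicit.
Variable R : realType.

Lemma sqle (a b : R) : 0 <= a -> 0 <= b -> (a <= b) = (a ^+ 2 <= b ^+ 2).
Proof.
move=> ha hb; apply/idP/idP => H; first by nra.
rewrite leNgt; apply/negP => H'; nra.
Qed.

Lemma sign_cmp (k c p q A' B D : R) : 0 < k -> 0 < p -> 0 < q -> 0 < D ->
  B = c * p ->
  (k * A') ^+ 2 - B ^+ 2 = D * (A' ^+ 2 - (c * q) ^+ 2) ->
  (k * A' <= B) = (A' <= c * q).
Proof.
move=> k0 p0 q0 D0 -> E.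
have [c0|c1] := lerP 0 c.
- have [a1|a2] := lerP A' 0.
    have -> : A' <= c * q by nra.
    apply/idP; nra.
  have ka : 0 <= k * A' by nra.
  have cq : 0 <= c * q by nra.
  have cp : 0 <= c * p by nra.
  rewrite (sqle ka cp) (sqle (ltW a2) cq).
  by rewrite -subr_le0 E -[X in _ = X]subr_le0 pmulr_rle0.
- have [a1|a2] := lerP A' 0; last first.
    have -> : (A' <= c * q) = false by apply/negbTE; rewrite -ltNge; nra.
    apply/negbTE; rewrite -ltNge; nra.
  rewrite -lerN2 -[X in _ = X]lerN2.
  have cq : 0 <= - (c * q) by nra.
  have cp : 0 <= - (c * p) by nra.
  have ka : 0 <= - (k * A') by nra.
  have kb : 0 <= - A' by nra.
  rewrite (sqle cp ka) (sqle cq kb).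
  rewrite !sqrrN -subr_ge0 E -[X in _ = X]subr_ge0 pmulr_rge0 //.
Qed.

Definition om (N N1 mh s c : R) : \bar R :=
  let thr := N / Num.sqrt N1 in
  let g := `|c| * Num.sqrt (N1 ^+ 2 / (N ^+ 2 - N1 * c ^+ 2)) in
  if c <= - thr then 0%E
  else if c < 0 then (Num.max 0 (mh - s * g))%:E
  else if c < thr then (mh + s * g)%:E
  else +oo%E.

Definition sc (N N1 mh s x : R) :=
  (N / N1 * (x - mh)) / Num.sqrt (s ^+ 2 + (x - mh) ^+ 2 / N1).

Lemma sc_bound (N N1 mh s x : R) : 0 < N -> N1 = N + 1 -> 0 < s ->
  - (N / Num.sqrt N1) < sc N N1 mh s x < N / Num.sqrt N1.
Proof.
move=> N0 -> s0.
set d := x - mh.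
have N10 : 0 < N + 1 by lra.
have q0 : 0 < s ^+ 2 + d ^+ 2 / (N + 1).
  have h1 : 0 <= d ^+ 2 / (N + 1) by rewrite divr_ge0 // ?sqr_ge0 // ltW.
  have h2 : 0 < s ^+ 2 by rewrite exprn_gt0.
  lra.
set q := Num.sqrt (s ^+ 2 + d ^+ 2 / (N + 1)).
have qp : 0 < q by rewrite sqrtr_gt0.
set t := Num.sqrt (N+1).
have tp : 0 < t by rewrite sqrtr_gt0.
set b := N / t * q.
have bp : 0 < b by rewrite mulr_gt0 // divr_gt0.
set a := N / (N+1) * d.
have ab : a ^+ 2 < b ^+ 2.
  rewrite /a /b /q /t !exprMn !exprVn !sqr_sqrtr ?(ltW q0) ?(ltW N10) // -subr_gt0.
  have -> : N ^+ 2 / (N + 1) * (s ^+ 2 + d ^+ 2 / (N + 1)) - N ^+ 2 / (N + 1) ^+ 2 * d ^+ 2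
     = N ^+2 * s ^+ 2 / (N+1).
    by field; lra.
  by rewrite divr_gt0 // mulr_gt0 // exprn_gt0.
rewrite /sc -/d -/q -/t.
rewrite ltr_pdivrMr // ltr_pdivlMr // -/a -/b.
rewrite mulNr -/b.
clear -ab bp; apply/andP; split; nra.
Qed.

Lemma sc_mid (N N1 mh s x c : R) : 0 < N -> N1 = N + 1 -> 0 < s ->
  - (N / Num.sqrt N1) < c -> c < N / Num.sqrt N1 ->
  (sc N N1 mh s x <= c) =
  (x - mh <= c * (s * Num.sqrt (N1 ^+ 2 / (N ^+ 2 - N1 * c ^+ 2)))).
Proof.
move=> N0 eN s0 c1 c2.
have N10 : 0 < N1 by lra.
set t := Num.sqrt N1.
have tp : 0 < t by rewrite sqrtr_gt0.
have t2 : t ^+ 2 = N1 by rewrite sqr_sqrtr // ltW.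
have cc : c ^+ 2 < (N / t) ^+ 2 by nra.
have D0 : 0 < N ^+ 2 - N1 * c ^+ 2.
  move: cc; rewrite expr_div_n t2 ltr_pdivlMr // => cc; rewrite subr_gt0; nra.
set D := N ^+ 2 - N1 * c ^+ 2 in D0 *.
set d := x - mh.
have q0 : 0 < s ^+ 2 + d ^+ 2 / N1.
  have h1 : 0 <= d ^+ 2 / N1 by rewrite divr_ge0 // ?sqr_ge0 // ltW.
  have h2 : 0 < s ^+ 2 by rewrite exprn_gt0.
  lra.
set q := Num.sqrt (s ^+ 2 + d ^+ 2 / N1).
have qp : 0 < q by rewrite sqrtr_gt0.
have q2 : q ^+ 2 = s ^+ 2 + d ^+ 2 / N1 by rewrite sqr_sqrtr // ltW.
have Q0 : 0 < N1 ^+ 2 / D by rewrite divr_gt0 // exprn_gt0.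
set r := Num.sqrt (N1 ^+ 2 / D).
have rp : 0 < r by rewrite sqrtr_gt0.
have r2 : r ^+ 2 = N1 ^+ 2 / D by rewrite sqr_sqrtr // ltW.
rewrite /sc -/d -/q ler_pdivrMr //.
apply: (@sign_cmp (N / N1) c q (s * r) d (c * q) (D / N1 ^+ 2)) => //.
- by rewrite divr_gt0.
- by rewrite mulr_gt0.
- by rewrite divr_gt0 // exprn_gt0.
- rewrite !exprMn q2 r2.
  have D1 : D != 0 by rewrite gt_eqF.
  have N11 : N1 != 0 by rewrite gt_eqF.
  rewrite /D in D1 *. field. by rewrite D1 N11.
Qed.

Lemma sc_char (N N1 mh s x c : R) : 0 < N -> N1 = N + 1 -> 0 < s -> 0 < x ->
  (sc N N1 mh s x <= c) = (x%:E <= om N N1 mh s c)%E.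
Proof.
move=> N0 eN s0 x0.
have /andP[lo hi] := sc_bound mh x N0 eN s0.
rewrite /om.
case: ifP => [c1|/negbT c1].
  by rewrite lee_fin !leNgt x0 (le_lt_trans c1 lo).
rewrite -ltNge in c1.
case: ifP => [c2|/negbT c2].
  rewrite lee_fin le_max leNgt x0 /= ltr0_norm //.
  rewrite sc_mid //; last by apply: lt_trans c2 _; rewrite divr_gt0 // sqrtr_gt0; lra.
  by rewrite mulNr mulrN opprK mulrCA; apply/idP/idP => ?; lra.
rewrite -leNgt in c2.
case: ifP => [c3|/negbT c3].
  rewrite lee_fin ger0_norm // sc_mid //.
  by rewrite mulrCA; apply/idP/idP => ?; lra.
rewrite -leNgt in c3.
rewrite leey; exact: (le_trans (ltW hi) c3).
Qed.

Lemma om_ge0 (N N1 mh s c : R) : 0 <= mh -> 0 <= s -> (0 <= om N N1 mh s c)%E.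
Proof.
move=> m0 s0; rewrite /om.
case: ifP => _ //.
case: ifP => _; first by rewrite lee_fin le_max lexx.
case: ifP => _ //.
rewrite lee_fin addr_ge0 // mulr_ge0 // mulr_ge0 // sqrtr_ge0.
Qed.

Lemma om_mono (N N1 mh s : R) : 0 < N -> N1 = N + 1 -> 0 < s -> 0 <= mh ->
  {homo om N N1 mh s : c c' / c <= c' >-> (c <= c')%E}.
Proof.
move=> N0 eN s0 m0 c c' cc'.
have key : forall x, 0 < x -> (x%:E <= om N N1 mh s c)%E -> (x%:E <= om N N1 mh s c')%E.
  move=> x x0; rewrite -!sc_char // => h; exact: le_trans h cc'.
have g0 := om_ge0 N N1 c' m0 (ltW s0).
have g1 := om_ge0 N N1 c m0 (ltW s0).
case E1: (om N N1 mh s c') g0 => [b| |] //= b0; last by rewrite leey.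
rewrite leNgt; apply/negP => hlt.
case E0: (om N N1 mh s c) g1 hlt => [a| |] //= a0 hlt.
- rewrite lee_fin in b0; rewrite lte_fin in hlt.
  have a0' : 0 < a by lra.
  have := key a a0'; rewrite E0 E1 !lee_fin lexx => /(_ isT) hab.
  lra.
- rewrite lee_fin in b0.
  have b1 : 0 < b + 1 by lra.
  have := key (b + 1) b1; rewrite E0 E1 leey lee_fin => /(_ isT) hab.
  lra.
Qed.
End Abs.

Section Stat.
Local Set Implicit Arguments. Local Unset Strict Implicit.
Variable R : realType.

Lemma stats (n : nat) (w : 'I_n -> R) (x : R) : (0 < n)%N ->
  \sum_(i < n) (w i - (n.+1%:R)^-1 * (\sum_(k < n) w k + x)) ^+ 2
  + (x - (n.+1%:R)^-1 * (\sum_(k < n) w k + x)) ^+ 2 =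
  \sum_(i < n) (w i - n%:R^-1 * \sum_(k < n) w k) ^+ 2
  + n%:R / n.+1%:R * (x - n%:R^-1 * \sum_(k < n) w k) ^+ 2.
Proof.
move=> n0.
set S := \sum_(k < n) w k.
set mh := n%:R^-1 * S.
set m := (n.+1%:R)^-1 * (S + x).
have N0 : 0 < n%:R :> R by rewrite ltr0n.
have e1 : forall i, (w i - m) ^+ 2 = (w i - mh) ^+ 2 + (2 * (mh - m)) * (w i - mh) + (mh - m) ^+ 2.
  by move=> i; ring.
rewrite (eq_bigr _ (fun i _ => e1 i)) !big_split /= -mulr_sumr sumr_const card_ord.
have e2 : \sum_(i < n) (w i - mh) = 0.
  rewrite sumrB sumr_const card_ord -/S /mh -mulr_natr.
  by field; rewrite gt_eqF.
rewrite e2 mulr0 addr0 -addrA; congr (_ + _).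
rewrite -mulr_natr /m /mh -natr1.
field. 
have : 0 < n%:R + 1 :> R by lra.
move=> h; rewrite (gt_eqF N0) (gt_eqF h) //.
Qed.

Lemma det (n d : nat) (e : 'I_n.+1 -> 'I_d -> R) :
  (2 <= n)%N -> (forall i j, 0 <= e i j) -> (forall j, e ord_max j != 0) ->
  (forall j, e ord0 j != e (inord 1) j) ->
     (forall j, {homo omega e j : c c' / c <= c' >-> (c <= c')%E}) /\
     (forall c : R,
        (S_oracle e ord_max <= c%:E)%E <->
        (forall j, 0 <= e ord_max j /\ ((e ord_max j)%:E <= omega e j c)%E)).
Proof.
move=> n2 pos nz dist.
have n0 : (0 < n)%N by lia.
have N0 : 0 < n%:R :> R by rewrite ltr0n.
have eN : n.+1%:R = n%:R + 1 :> R by rewrite -natr1.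
pose w j (i : 'I_n) := e (widen_ord (leqnSn n) i) j.
have muE j : mu_hat e j = n%:R^-1 * \sum_(i < n) w j i.
  by rewrite /mu_hat (big_ord_narrow (leqnSn n)).
have sigE j : sigma_hat e j = Num.sqrt (n%:R^-1 * \sum_(i < n) (w j i - mu_hat e j) ^+ 2).
  by rewrite /sigma_hat (big_ord_narrow (leqnSn n)).
have moE j : mu_oracle e j = (n.+1%:R)^-1 * (\sum_(i < n) w j i + e ord_max j).
  by rewrite /mu_oracle big_ord_recr.
have soE j : sigma_oracle e j = Num.sqrt (n%:R^-1 *
   (\sum_(i < n) (w j i - mu_oracle e j) ^+ 2 + (e ord_max j - mu_oracle e j) ^+ 2)).
  by rewrite /sigma_oracle big_ord_recr.
have mh0 j : 0 <= mu_hat e j.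
  by rewrite muE mulr_ge0 ?invr_ge0 ?ler0n // sumr_ge0 // => i _; apply: pos.
have sig0 j : 0 < sigma_hat e j.
  rewrite sigE sqrtr_gt0 pmulr_rgt0 ?invr_gt0 //.
  rewrite lt_neqAle sumr_ge0 ?andbT; last by move=> i _; rewrite sqr_ge0.
  apply/negP; rewrite eq_sym => /eqP HS.
  have H := psumr_eq0P (fun i _ => sqr_ge0 (w j i - mu_hat e j)) HS.
  have H0 := H (Ordinal n0) isT; have H1 := H (Ordinal n2) isT.
  move/eqP: H0; rewrite sqrf_eq0 subr_eq0 => /eqP H0.
  move/eqP: H1; rewrite sqrf_eq0 subr_eq0 => /eqP H1.
  rewrite /w in H0 H1.
  have E0 : widen_ord (leqnSn n) (Ordinal n0) = ord0 by apply: val_inj.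
  have E1 : widen_ord (leqnSn n) (Ordinal n2) = inord 1 by apply: val_inj; rewrite /= inordK.
  rewrite E0 in H0; rewrite E1 in H1.
  by move: (dist j); rewrite H0 H1 eqxx.
have scE j : (e ord_max j - mu_oracle e j) / sigma_oracle e j =
    sc n%:R n.+1%:R (mu_hat e j) (sigma_hat e j) (e ord_max j).
  rewrite /sc soE.
  have -> : n%:R^-1 * (\sum_(i < n) (w j i - mu_oracle e j) ^+ 2 +
      (e ord_max j - mu_oracle e j) ^+ 2) =
      sigma_hat e j ^+ 2 + (e ord_max j - mu_hat e j) ^+ 2 / n.+1%:R.
    rewrite moE stats // sigE sqr_sqrtr; last first.
      by rewrite mulr_ge0 ?invr_ge0 ?ler0n // sumr_ge0 // => i _; rewrite sqr_ge0.
    rewrite -muE eN; field; lra.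
  congr (_ / _).
  rewrite moE muE eN; field; lra.
have xpos j : 0 < e ord_max j by rewrite lt_neqAle eq_sym nz pos.
split.
  move=> j c c' cc'.
  exact: (om_mono N0 eN (sig0 j) (mh0 j) cc').
move=> c; split.
  move/bigmax_leP => [_ H] j; split; first exact: pos.
  have := H j isT; rewrite lee_fin scE sc_char //.
move=> H; apply/bigmax_leP; split; first by rewrite leNye.
move=> j _; rewrite lee_fin scE sc_char //; exact: (H j).2.
Qed.
End Stat.

Theorem lemma1 (R : realType) (d0 : measure_display) (T : measurableType d0)
  (P : probability T R) (n d : nat) (E : 'I_n.+1 -> 'I_d -> T -> R) :
  (2 <= n)%N -> (1 <= d)%N ->
  (forall i j, measurable_fun setT (E i j)) ->
  exchangeable P E ->
  (* Assumption A *)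
  (forall i j (x : R), P [set t | E i j t = x] = 0%E) ->
  (forall i j, {ae P, forall t, 0 <= E i j t}) ->
  (forall i j, E i j \in Lfun P 1%:E) ->
  (forall i j, E i j \in Lfun P 2%:E) ->
  (forall i j, (0 < 'V_P[E i j])%E) ->
  (forall j, {ae P, forall t, forall i i' : 'I_n.+1, i != i' -> E i j t != E i' j t}) ->
  {ae P, forall t,
     let e := fun i j => E i j t in
     (forall j, {homo omega e j : c c' / c <= c' >-> (c <= c')%E}) /\
     (forall c : R,
        (S_oracle e ord_max <= c%:E)%E <->
        (forall j, 0 <= e ord_max j /\ ((e ord_max j)%:E <= omega e j c)%E))}.
Proof.
move=> n2 _ mE _ atom pos _ _ _ dist.
have H1 : {ae P, forall t, forall i j, 0 <= E i j t}.
  apply: filter_forall => i; apply: filter_forall => j; exact: pos.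
have H2 : {ae P, forall t, forall j, E ord_max j t != 0}.
  apply: filter_forall => j.
  exists [set t | E ord_max j t = 0]; split => //.
  - have := mE ord_max j measurableT [set 0] (measurable_set1 0).
    by rewrite setTI.
  - by move=> t /= /negP; rewrite negbK => /eqP.
have H3 : {ae P, forall t, forall j, forall i i' : 'I_n.+1, i != i' -> E i j t != E i' j t}.
  by apply: filter_forall => j; exact: dist.
near=> t.
apply: (@det R n d (fun i j => E i j t)) => //.
- by move=> i j; exact: (near H1 t).
- by move=> j; exact: (near H2 t).
- move=> j; apply: (near H3 t).
  by []. rewrite -val_eqE /= inordK; [by [] | lia].
Unshelve. all: by end_near. Qed.
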